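(* Let $q>1$, $p=\frac{q}{q-1}$, and assume Hypothesis (H$_q$). Then for all $x\in[a,b]$ and $\lambda\in[0,1]$, $$\Big|(1-\lambda)f(mx)+\lambda\frac{(x-a)f(ma)+(b-x)f(mb)}{b-a}-\frac{1}{m(b-a)}\int_{ma}^{mb}f(t)\,dt\Big|\le\frac{mA_4(1,\lambda,p)^{\frac1p}}{b-a}\Big\{(x-a)^2\Big(\frac{|f'(mx)|^q+\alpha m|f'(a)|^q}{\alpha+1}\Big)^{\frac1q}+(b-x)^2\Big(\frac{|f'(mx)|^q+\alpha m|f'(b)|^q}{\alpha+1}\Big)^{\frac1q}\Big\}.$$
   Context: $(\alpha,m)$-convexity: for $(\alpha,m)\in[0,1]\times(0,1]$ and an interval $K\subseteq[0,\infty)$, a function $g:K\to\mathbb{R}$ is $(\alpha,m)$-convex on $K$ if $g(tX+m(1-t)Y)\le t^\alpha g(X)+m(1-t^\alpha)g(Y)$ for all $X,Y\in K$ and $t\in[0,1]$ with $tX+m(1-t)Y\in K$ (convention $0^0=1$). Hypothesis (H$_q$): $I\subseteq[0,\infty)$ is an interval, $f:I\to\mathbb{R}$ is differentiable on the interior $I^\circ$, $m\in(0,1]$, $\alpha\in[0,1]$, $a<b$ with $ma,b\in I^\circ$, $f'$ is Lebesgue integrable on $[ma,mb]$, and $|f'|^q$ is $(\alpha,m)$-convex on $[ma,b]$. $\beta(u,v)=\int_0^1t^{u-1}(1-t)^{v-1}dt$ ($u,v>0$) is the Beta function and ${}_2F_1(a',b';c';z)=\frac{1}{\beta(b',c'-b')}\int_0^1t^{b'-1}(1-t)^{c'-b'-1}(1-zt)^{-a'}dt$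 ($c'>b'>0$, $|z|<1$) the hypergeometric function. For $\theta>0$, $p>1$: $A_4(\theta,\lambda,p)=\frac{1}{\theta p+1}$ if $\lambda=0$; $A_4(\theta,\lambda,p)=\frac{\lambda^{\frac{\theta p+1}{\theta}}}{\theta}\Big\{\beta\big(\tfrac1\theta,p+1\big)+\frac{(1-\lambda)^{p+1}}{p+1}\,{}_2F_1\big(\tfrac1\theta+p+1,\,p+1;\,p+2;\,1-\lambda\big)\Big\}$ if $0<\lambda<1$; $A_4(\theta,1,p)=\frac1\theta\beta\big(p+1,\tfrac1\theta\big)$. *)

(* Defs.v *)
From Stdlib Require Import Reals Lra ClassicalEpsilon.
Open Scope R_scope.

(* Real power t^a for t >= 0, with the convention 0^0 = 1 and 0^a = 0 for a <> 0. *)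
Definition rpow (t a : R) : R :=
  if Rlt_dec 0 t then Rpower t a
  else if Req_EM_T a 0 then 1 else 0.

(* Riemann integral of f over [a,b] as a plain real number (value of
   RiemannInt when f is Riemann integrable; 0 otherwise, never used). *)
Definition RInt (f : R -> R) (a b : R) : R :=
  match excluded_middle_informative
          (exists v, exists pr : Riemann_integrable f a b, RiemannInt pr = v) with
  | left H => proj1_sig (constructive_indefinite_description _ H)
  | right _ => 0
  end.

Definition Beta (u v : R) : R :=
  RInt (fun t => rpow t (u - 1) * rpow (1 - t) (v - 1)) 0 1.

(* Gauss hypergeometric function (Euler integral representation). *)
Definition F21 (a' b' c' z : R) : R :=
  / Beta b' (c' - b') *
  RInt (fun t => rpow t (b' - 1) * rpow (1 - t) (c' - b' - 1) * rpow (1 - z * t) (- a')) 0 1.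

Definition A4 (theta lam p : R) : R :=
  if Req_EM_T lam 0 then / (theta * p + 1)
  else if Req_EM_T lam 1 then / theta * Beta (p + 1) (/ theta)
  else rpow lam ((theta * p + 1) / theta) / theta *
       (Beta (/ theta) (p + 1) +
        rpow (1 - lam) (p + 1) / (p + 1) *
        F21 (/ theta + p + 1) (p + 1) (p + 2) (1 - lam)).

Definition alpha_m_convex (alpha m : R) (K : R -> Prop) (g : R -> R) : Prop :=
  forall X Y t, K X -> K Y -> 0 <= t <= 1 ->
    K (t * X + m * (1 - t) * Y) ->
    g (t * X + m * (1 - t) * Y) <= rpow t alpha * g X + m * (1 - rpow t alpha) * g Y.

Definition is_interval_nonneg (I : R -> Prop) : Prop :=
  (forall x, I x -> 0 <= x) /\
  (forall x y z, I x -> I z -> x <= y <= z -> I y).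

(* Main.v *)
From Stdlib Require Import Reals Lra ClassicalEpsilon.
From Coquelicot Require Import Coquelicot.
Require Import Defs.
Open Scope R_scope.


Lemma rpow_pos x r : 0 < x -> rpow x r = Rpower x r.
Proof. intros H; unfold rpow; destruct (Rlt_dec 0 x); [reflexivity|lra]. Qed.

Lemma rpow_npos x r : x <= 0 -> r <> 0 -> rpow x r = 0.
Proof. intros H H'; unfold rpow; destruct (Rlt_dec 0 x); [lra|].
destruct (Req_EM_T r 0); [contradiction|reflexivity]. Qed.

Lemma rpow_r0 x : rpow x 0 = 1.
Proof. unfold rpow; destruct (Rlt_dec 0 x). apply Rpower_O; lra.
destruct (Req_EM_T 0 0); [reflexivity|lra]. Qed.

Lemma rpow_ge0 x r : 0 <= rpow x r.
Proof. unfold rpow; destruct (Rlt_dec 0 x). unfold Rpower; left; apply exp_pos.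
destruct (Req_EM_T r 0); lra. Qed.

Lemma rpow_1r r : rpow 1 r = 1.
Proof. rewrite rpow_pos by lra. unfold Rpower. rewrite ln_1, Rmult_0_r. apply exp_0. Qed.

Lemma Rpower_gt0 x r : 0 < Rpower x r.
Proof. unfold Rpower; apply exp_pos. Qed.

Lemma rpow_small r : 0 < r -> forall eps, 0 < eps ->
  exists delta, 0 < delta /\ forall h, Rabs h < delta -> rpow h r < eps.
Proof.
intros Hr eps He. exists (Rpower eps (/ r)). split. apply Rpower_gt0.
intros h Hh. destruct (Rle_dec h 0).
- rewrite rpow_npos by lra. exact He.
- rewrite rpow_pos by lra. rewrite Rabs_right in Hh by lra.
  replace eps with (Rpower (Rpower eps (/ r)) r).
  apply Rlt_Rpower_l; lra.
  rewrite Rpower_mult. rewrite Rinv_l by lra. apply Rpower_1; lra.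
Qed.

Lemma rpow_cont0 r : 0 < r -> continuity_pt (fun t => rpow t r) 0.
Proof.
intros Hr eps He. destruct (rpow_small r Hr eps He) as [d [Hd Hh]].
exists d; split; [lra|]. intros h [_ Hh2]. simpl in *. unfold R_dist in *.
rewrite (rpow_npos 0 r) by lra. rewrite Rminus_0_r, Rabs_right by apply Rle_ge, rpow_ge0.
apply Hh. rewrite Rminus_0_r in Hh2. exact Hh2.
Qed.

Lemma rpow_derive_pos x r : 0 < x -> is_derive (fun t => rpow t r) x (r * rpow x (r - 1)).
Proof.
intros Hx. rewrite rpow_pos by lra. apply is_derive_Reals.
apply derivable_pt_lim_locally_ext with (f := fun t => Rpower t r) (a := 0) (b := x + 1).
lra. intros z Hz. rewrite rpow_pos by lra. reflexivity.
apply derivable_pt_lim_power; lra.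
Qed.

Lemma rpow_derive_gt1 x r : 1 < r -> is_derive (fun t => rpow t r) x (r * rpow x (r - 1)).
Proof.
intros Hr. destruct (Rlt_dec 0 x) as [Hx|Hx]. now apply rpow_derive_pos.
destruct (Rlt_dec x 0) as [Hx'|Hx'].
- rewrite (rpow_npos x (r-1)) by lra. rewrite Rmult_0_r. apply is_derive_Reals.
  apply derivable_pt_lim_locally_ext with (f := fun _ => 0) (a := x - 1) (b := 0).
  lra. intros z Hz. rewrite rpow_npos by lra. reflexivity. apply derivable_pt_lim_const.
- assert (x = 0) by lra. subst x. rewrite (rpow_npos 0 (r-1)) by lra. rewrite Rmult_0_r.
  apply is_derive_Reals. intros eps He.
  destruct (rpow_small (r-1) ltac:(lra) eps He) as [d [Hd Hh]].
  exists (mkposreal d Hd). intros h Hh0 Hhd. simpl in Hhd.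
  rewrite Rplus_0_l, (rpow_npos 0 r) by lra. rewrite Rminus_0_r, Rminus_0_r.
  destruct (Rle_dec h 0).
  + rewrite rpow_npos by lra. unfold Rdiv; rewrite Rmult_0_l, Rabs_R0; lra.
  + rewrite rpow_pos by lra. replace r with ((r - 1) + 1) at 1 by ring.
    rewrite Rpower_plus, Rpower_1 by lra. unfold Rdiv. rewrite Rmult_assoc, Rinv_r, Rmult_1_r by lra.
    rewrite Rabs_right by (left; apply Rpower_gt0). rewrite <- rpow_pos by lra. apply Hh; exact Hhd.
Qed.

Lemma deriv_cont_pt f x l : is_derive f x l -> continuity_pt f x.
Proof. intros H. apply is_derive_Reals in H. apply derivable_continuous_pt. exists l; exact H. Qed.

Lemma rpow_cont_pt x r : 0 < r -> continuity_pt (fun t => rpow t r) x.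
Proof.
intros Hr. destruct (Rlt_dec 0 x) as [Hx|Hx].
apply (deriv_cont_pt _ _ _ (rpow_derive_pos x r Hx)).
destruct (Rlt_dec x 0) as [Hx'|Hx'].
- apply (deriv_cont_pt _ _ 0). apply is_derive_Reals.
  apply derivable_pt_lim_locally_ext with (f := fun _ => 0) (a := x - 1) (b := 0).
  lra. intros z Hz. rewrite rpow_npos by lra. reflexivity. apply derivable_pt_lim_const.
- assert (x = 0) by lra. subst x. now apply rpow_cont0.
Qed.

Lemma rpow_cont x r : 0 < r -> continuous (fun t => rpow t r) x.
Proof. intros Hr. apply continuity_pt_filterlim. now apply rpow_cont_pt. Qed.


Lemma cmp_lemma E dE psi dpsi :
  (forall s, 0 < s < 1 -> is_derive E s (dE s)) ->
  (forall s, 0 < s < 1 -> is_derive psi s (dpsi s)) ->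
  (forall s, 0 <= s <= 1 -> continuity_pt E s) ->
  (forall s, 0 <= s <= 1 -> continuity_pt psi s) ->
  (forall s, 0 <= s <= 1 -> Rabs (dE s) <= dpsi s) ->
  Rabs (E 1 - E 0) <= psi 1 - psi 0.
Proof.
intros HE Hp CE Cp Hb.
assert (H0 : Rmin 0 1 = 0) by (apply Rmin_left; lra).
assert (H1 : Rmax 0 1 = 1) by (apply Rmax_right; lra).
destruct (MVT_gen (fun s => psi s - E s) 0 1 (fun s => dpsi s - dE s)) as [c [Hc Heq]].
{ rewrite H0, H1; intros s Hs. apply (is_derive_minus psi E); auto. }
{ rewrite H0, H1; intros s Hs. apply continuity_pt_minus; auto. }
destruct (MVT_gen (fun s => psi s + E s) 0 1 (fun s => dpsi s + dE s)) as [c' [Hc' Heq']].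
{ rewrite H0, H1; intros s Hs. apply (is_derive_plus psi E); auto. }
{ rewrite H0, H1; intros s Hs. apply continuity_pt_plus; auto. }
rewrite H0, H1 in Hc, Hc'.
pose proof (Hb c Hc) as B1. pose proof (Hb c' Hc') as B2.
apply Rabs_le_between in B1. apply Rabs_le_between in B2. apply Rabs_le. lra.
Qed.

Lemma exp_ge x : 1 + x <= exp x.
Proof. destruct (Req_dec x 0). subst; rewrite exp_0; lra. left; now apply exp_ineq1. Qed.

Lemma exp_convex t u v : 0 <= t <= 1 -> exp (t * u + (1 - t) * v) <= t * exp u + (1 - t) * exp v.
Proof.
intros Ht. set (w := t * u + (1 - t) * v).
assert (A : exp w * (1 + (u - w)) <= exp u).
{ replace u with (w + (u - w)) at 2 by ring. rewrite exp_plus.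
  apply Rmult_le_compat_l. left; apply exp_pos. apply exp_ge. }
assert (B : exp w * (1 + (v - w)) <= exp v).
{ replace v with (w + (v - w)) at 2 by ring. rewrite exp_plus.
  apply Rmult_le_compat_l. left; apply exp_pos. apply exp_ge. }
assert (exp w = t * (exp w * (1 + (u - w))) + (1 - t) * (exp w * (1 + (v - w)))) by (unfold w; ring).
rewrite H. apply Rplus_le_compat; apply Rmult_le_compat_l; lra.
Qed.

Lemma amgm U V t : 0 <= U -> 0 <= V -> 0 < t < 1 ->
  rpow U t * rpow V (1 - t) <= t * U + (1 - t) * V.
Proof.
intros HU HV Ht.
destruct (Req_dec U 0) as [->|HU'].
{ rewrite (rpow_npos 0 t) by lra. rewrite Rmult_0_l. nra. }
destruct (Req_dec V 0) as [->|HV'].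
{ rewrite (rpow_npos 0 (1-t)) by lra. rewrite Rmult_0_r. nra. }
rewrite !rpow_pos by lra. unfold Rpower. rewrite <- exp_plus.
rewrite <- (exp_ln U) at 2 by lra. rewrite <- (exp_ln V) at 2 by lra.
replace (t * ln U + (1 - t) * ln V) with (t * ln U + (1 - t) * ln V) by ring.
apply exp_convex; lra.
Qed.

Lemma rpow_le_inv Y B q : 1 < q -> 0 <= Y -> rpow Y q <= B -> Y <= rpow B (/ q).
Proof.
intros Hq HY HB. destruct (Req_dec Y 0) as [->|HY']. apply rpow_ge0.
rewrite rpow_pos in HB by lra. pose proof (Rpower_gt0 Y q).
rewrite rpow_pos by lra.
replace Y with (Rpower (Rpower Y q) (/ q)) at 1.
apply Rle_Rpower_l. left; apply Rinv_0_lt_compat; lra. lra.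
rewrite Rpower_mult, Rinv_r, Rpower_1 by lra. reflexivity.
Qed.

Lemma young q w Y B d : 1 < q -> 0 <= w -> 0 <= Y -> rpow Y q <= B -> 0 < d ->
  w * Y <= d * rpow w (q / (q - 1)) / (q / (q - 1)) + B / (q * rpow d (q - 1)).
Proof.
intros Hq Hw HY HB Hd.
assert (HB0 : 0 <= B) by (pose proof (rpow_ge0 Y q); lra).
assert (Hdq : 0 < rpow d (q - 1)) by (rewrite rpow_pos by lra; apply Rpower_gt0).
assert (Hp : 0 < q / (q - 1)) by (apply Rdiv_lt_0_compat; lra).
assert (R0 : 0 <= d * rpow w (q / (q - 1)) / (q / (q - 1)) + B / (q * rpow d (q - 1))).
{ apply Rplus_le_le_0_compat. apply Rmult_le_pos. apply Rmult_le_pos. lra. apply rpow_ge0.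
  left; apply Rinv_0_lt_compat; lra. apply Rmult_le_pos. lra. left; apply Rinv_0_lt_compat; nra. }
pose proof (rpow_le_inv Y B q Hq HY HB) as HYB.
apply Rle_trans with (w * rpow B (/ q)). apply Rmult_le_compat_l; lra.
destruct (Req_dec w 0) as [->|Hw']. rewrite Rmult_0_l; exact R0.
destruct (Req_dec B 0) as [->|HB']. rewrite (rpow_npos 0 (/ q)), Rmult_0_r. exact R0. lra.
  apply Rinv_neq_0_compat; lra.
set (p := q / (q - 1)) in *.
set (U := d * rpow w p). set (V := B / rpow d (q - 1)).
assert (HU : 0 < U) by (unfold U; rewrite rpow_pos by lra; pose proof (Rpower_gt0 w p); nra).
assert (HV : 0 < V) by (unfold V; apply Rdiv_lt_0_compat; lra).
assert (E : w * rpow B (/ q) = rpow U (/ p) * rpow V (1 - / p)).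
{ rewrite !rpow_pos by (try lra; try (apply Rinv_0_lt_compat; lra)).
  unfold U, V. rewrite !rpow_pos by lra. unfold Rpower.
  rewrite <- exp_plus. rewrite ln_mult, ln_exp, ln_div, ln_exp by (try lra; apply exp_pos).
  rewrite <- (exp_ln w) at 1 by lra. rewrite <- exp_plus. f_equal. unfold p. field. lra. }
rewrite E. eapply Rle_trans. apply amgm; try lra.
split. apply Rinv_0_lt_compat; lra. unfold p. rewrite Rinv_div. apply Rmult_lt_reg_r with q. lra.
  unfold Rdiv. rewrite Rmult_assoc, Rinv_l by lra. lra.
right. unfold U, V, p. field. split. lra. split. lra. lra.
Qed.


Lemma isd_eq (f : R -> R) x (l l' : R) : is_derive f x l -> l = l' -> is_derive f x l'.
Proof. intros H ->; exact H. Qed.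

Lemma isd_plus (f g : R -> R) x a b : is_derive f x a -> is_derive g x b ->
  is_derive (fun t => f t + g t) x (a + b).
Proof. rewrite !is_derive_Reals. intros. apply (derivable_pt_lim_plus f g); auto. Qed.

Lemma isd_minus (f g : R -> R) x a b : is_derive f x a -> is_derive g x b ->
  is_derive (fun t => f t - g t) x (a - b).
Proof. rewrite !is_derive_Reals. intros. apply (derivable_pt_lim_minus f g); auto. Qed.

Lemma isd_mult (f g : R -> R) x a b : is_derive f x a -> is_derive g x b ->
  is_derive (fun t => f t * g t) x (a * g x + f x * b).
Proof. rewrite !is_derive_Reals. intros. apply (derivable_pt_lim_mult f g); auto. Qed.

Lemma isd_const (c : R) x : is_derive (fun _ => c) x 0.
Proof. rewrite is_derive_Reals. apply derivable_pt_lim_const. Qed.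

Lemma isd_id x : is_derive (fun t : R => t) x 1.
Proof. rewrite is_derive_Reals. apply derivable_pt_lim_id. Qed.

Lemma isd_scal (f : R -> R) c x a : is_derive f x a -> is_derive (fun t => c * f t) x (c * a).
Proof. intros H. eapply isd_eq. apply (isd_mult (fun _ => c) f x 0 a). apply isd_const. exact H. ring. Qed.

Lemma isd_lin (g : R -> R) k c x b : is_derive g (k * x + c) b ->
  is_derive (fun t => g (k * t + c)) x (k * b).
Proof.
intros H. rewrite is_derive_Reals in *.
assert (L : derivable_pt_lim (fun t => k * t + c) x k).
{ rewrite <- is_derive_Reals. eapply isd_eq. apply (isd_plus (fun t => k * t) (fun _ => c) x (k * 1) 0).
  apply isd_scal, isd_id. apply isd_const. ring. }
pose proof (derivable_pt_lim_comp (fun t => k * t + c) g x k b L H) as R.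
rewrite Rmult_comm. exact R.
Qed.


Lemma cpt_plus (f g : R -> R) x : continuity_pt f x -> continuity_pt g x -> continuity_pt (fun t => f t + g t) x.
Proof. intros. exact (continuity_pt_plus f g x H H0). Qed.
Lemma cpt_minus (f g : R -> R) x : continuity_pt f x -> continuity_pt g x -> continuity_pt (fun t => f t - g t) x.
Proof. intros. exact (continuity_pt_minus f g x H H0). Qed.
Lemma cpt_mult (f g : R -> R) x : continuity_pt f x -> continuity_pt g x -> continuity_pt (fun t => f t * g t) x.
Proof. intros. exact (continuity_pt_mult f g x H H0). Qed.
Lemma cpt_const (c : R) x : continuity_pt (fun _ => c) x.
Proof. apply continuity_pt_const. intros a b; reflexivity. Qed.
Lemma cpt_id x : continuity_pt (fun t : R => t) x.
Proof. apply continuity_pt_id. Qed.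

Lemma rpow_abs_split w p : p <> 0 -> rpow (Rabs w) p = rpow w p + rpow (- w) p.
Proof.
intros Hp. destruct (Rlt_dec 0 w).
- rewrite Rabs_right by lra. rewrite (rpow_npos (-w)) by lra. ring.
- rewrite (rpow_npos w) by lra. rewrite Rabs_left1 by lra.
  destruct (Req_dec w 0) as [->|]. rewrite Ropp_0, rpow_npos by lra. ring. ring.
Qed.

Definition Kf (p lam s : R) := / (p + 1) * (rpow (1 * s + - lam) (p + 1) - rpow (-1 * s + lam) (p + 1)).

Lemma Kf_derive p lam s : 0 < p -> is_derive (Kf p lam) s (rpow (s - lam) p + rpow (lam - s) p).
Proof.
intros Hp. unfold Kf. eapply isd_eq. apply isd_scal. apply isd_minus.
apply (isd_lin (fun w => rpow w (p + 1))). apply rpow_derive_gt1; lra.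
apply (isd_lin (fun w => rpow w (p + 1))). apply rpow_derive_gt1; lra.
replace (p + 1 - 1) with p by ring. replace (1 * s + - lam) with (s - lam) by ring.
replace (-1 * s + lam) with (lam - s) by ring. field. lra.
Qed.

Definition Lf (alpha m G H s : R) :=
  G * (/ (alpha + 1) * rpow s (alpha + 1)) + m * H * (s - / (alpha + 1) * rpow s (alpha + 1)).

Lemma Lf_derive alpha m G H s : 0 <= alpha -> 0 < s ->
  is_derive (Lf alpha m G H) s (rpow s alpha * G + m * (1 - rpow s alpha) * H).
Proof.
intros Ha Hs. unfold Lf. eapply isd_eq. apply isd_plus. apply isd_scal. apply isd_scal.
apply rpow_derive_pos; lra. apply isd_scal. apply isd_minus. apply isd_id. apply isd_scal.
apply rpow_derive_pos; lra. replace (alpha + 1 - 1) with alpha by ring. field. lra.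
Qed.

Lemma Lf_cont alpha m G H s : 0 <= alpha -> continuity_pt (Lf alpha m G H) s.
Proof.
intros Ha. unfold Lf. apply cpt_plus; apply cpt_mult; try apply cpt_const.
apply cpt_mult. apply cpt_const. apply rpow_cont_pt; lra.
apply cpt_minus. apply cpt_id. apply cpt_mult. apply cpt_const. apply rpow_cont_pt; lra.
Qed.

Lemma Lf_diff alpha m G H : 0 <= alpha ->
  Lf alpha m G H 1 - Lf alpha m G H 0 = (G + alpha * m * H) / (alpha + 1).
Proof.
intros Ha. unfold Lf. rewrite rpow_1r, (rpow_npos 0) by lra. field. lra.
Qed.

Lemma Kf_diff p lam : 0 < p -> 0 <= lam <= 1 ->
  Kf p lam 1 - Kf p lam 0 = (rpow lam (p + 1) + rpow (1 - lam) (p + 1)) / (p + 1).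
Proof.
intros Hp Hl. unfold Kf.
replace (1 * 1 + - lam) with (1 - lam) by ring. replace (-1 * 1 + lam) with (lam - 1) by ring.
replace (1 * 0 + - lam) with (- lam) by ring. replace (-1 * 0 + lam) with lam by ring.
rewrite (rpow_npos (lam - 1)) by lra. rewrite (rpow_npos (- lam)) by lra. field. lra.
Qed.


Lemma half_step (q lam alpha m G H C d : R) (E dE y : R -> R) :
  1 < q -> 0 <= lam <= 1 -> 0 <= alpha -> 0 <= C -> 0 < d ->
  (forall s, 0 < s < 1 -> is_derive E s (dE s)) ->
  (forall s, 0 <= s <= 1 -> continuity_pt E s) ->
  (forall s, 0 <= s <= 1 -> Rabs (dE s) <= C * Rabs (s - lam) * y s) ->
  (forall s, 0 <= s <= 1 -> 0 <= y s) ->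
  (forall s, 0 <= s <= 1 -> rpow (y s) q <= rpow s alpha * G + m * (1 - rpow s alpha) * H) ->
  Rabs (E 1 - E 0) <= C * (d * ((rpow lam (q/(q-1) + 1) + rpow (1 - lam) (q/(q-1) + 1)) / (q/(q-1) + 1)) / (q/(q-1))
       + ((G + alpha * m * H) / (alpha + 1)) / (q * rpow d (q - 1))).
Proof.
intros Hq Hl Ha HC Hd HE CE Hb Hy HB.
set (p := q / (q - 1)).
assert (Hp : 0 < p) by (unfold p; apply Rdiv_lt_0_compat; lra).
assert (Hdq : 0 < rpow d (q - 1)) by (rewrite rpow_pos by lra; apply Rpower_gt0).
set (c2 := / (q * rpow d (q - 1))).
set (psi := fun s => C * (d / p * Kf p lam s) + C * c2 * Lf alpha m G H s).
set (dpsi := fun s => C * (d / p * (rpow (s - lam) p + rpow (lam - s) p))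
                      + C * c2 * (rpow s alpha * G + m * (1 - rpow s alpha) * H)).
pose proof (cmp_lemma E dE psi dpsi HE) as Hc.
assert (Hpsi : Rabs (E 1 - E 0) <= psi 1 - psi 0).
{ apply Hc; auto.
  - intros s Hs. unfold psi, dpsi. apply isd_plus. apply isd_scal, isd_scal. apply Kf_derive; lra.
    apply isd_scal. apply Lf_derive; lra.
  - intros s Hs. unfold psi. apply cpt_plus. apply cpt_mult. apply cpt_const.
    apply cpt_mult. apply cpt_const. apply (deriv_cont_pt _ _ _ (Kf_derive p lam s Hp)).
    apply cpt_mult. apply cpt_const. apply Lf_cont; lra.
  - intros s Hs. eapply Rle_trans. apply Hb; exact Hs.
    apply Rle_trans with (C * (d * rpow (Rabs (s - lam)) p / p + (rpow s alpha * G + m * (1 - rpow s alpha) * H) / (q * rpow d (q - 1)))).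
    rewrite Rmult_assoc. apply Rmult_le_compat_l. exact HC.
    apply (young q (Rabs (s - lam)) (y s) _ d Hq (Rabs_pos _) (Hy s Hs) (HB s Hs) Hd).
    right. unfold dpsi. rewrite rpow_abs_split by lra. replace (- (s - lam)) with (lam - s) by ring.
    unfold c2. field. lra. }
eapply Rle_trans. exact Hpsi. right. unfold psi.
replace (C * (d / p * Kf p lam 1) + C * c2 * Lf alpha m G H 1 - (C * (d / p * Kf p lam 0) + C * c2 * Lf alpha m G H 0))
  with (C * (d / p * (Kf p lam 1 - Kf p lam 0)) + C * c2 * (Lf alpha m G H 1 - Lf alpha m G H 0)) by ring.
rewrite Kf_diff, Lf_diff by lra. unfold c2. field. lra.
Qed.

Lemma opt_lemma q K Q C D : 1 < q -> 0 < K -> 0 <= Q -> 0 <= C ->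
  (forall d, 0 < d -> D <= C * (d * K / (q / (q - 1)) + Q / (q * rpow d (q - 1)))) ->
  D <= C * rpow K (/ (q / (q - 1))) * rpow Q (/ q).
Proof.
intros Hq HK HQ HC Hd.
set (p := q / (q - 1)) in *.
assert (Hp : 0 < p) by (unfold p; apply Rdiv_lt_0_compat; lra).
destruct (Req_dec Q 0) as [->|HQ'].
- rewrite (rpow_npos 0 (/ q)) by (try lra; apply Rinv_neq_0_compat; lra). rewrite Rmult_0_r.
  destruct (Rle_dec D 0) as [|HD]; [assumption|exfalso].
  assert (HD0 : 0 < D) by lra. assert (0 <= C * K) by nra.
  set (d := D * p / (2 * (C * K + 1))).
  assert (Hd0 : 0 < d) by (unfold d; apply Rdiv_lt_0_compat; nra).
  specialize (Hd d Hd0). replace (0 / (q * rpow d (q - 1))) with 0 in Hd by (unfold Rdiv; ring). rewrite Rplus_0_r in Hd.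
  assert (HH : C * (d * K / p) = D * (C * K) / (2 * (C * K + 1))) by (unfold d; field; nra).
  rewrite HH in Hd.
  assert (D * (C * K) / (2 * (C * K + 1)) < D). 
  { apply Rmult_lt_reg_r with (2 * (C * K + 1)). nra. unfold Rdiv. rewrite Rmult_assoc, Rinv_l by nra. nra. }
  lra.
- assert (HQp : 0 < Q) by lra.
  set (d := Rpower (Q / K) (/ q)).
  assert (Hd0 : 0 < d) by apply Rpower_gt0.
  specialize (Hd d Hd0). eapply Rle_trans. exact Hd. right.
  rewrite !rpow_pos by lra.
  set (X := exp (ln K / p + ln Q / q)).
  assert (E1 : d * K = X).
  { unfold d, X, Rpower. rewrite ln_div by lra. rewrite <- (exp_ln K) at 2 by lra. rewrite <- exp_plus.
    f_equal. unfold p. field. lra. }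
  assert (E2 : Q / Rpower d (q - 1) = X).
  { unfold d, X. rewrite Rpower_mult. unfold Rpower. rewrite ln_div by lra.
    rewrite <- (exp_ln Q) at 1 by lra. unfold Rdiv. rewrite <- exp_Ropp, <- exp_plus.
    f_equal. unfold p. field. lra. }
  assert (E3 : Rpower K (/ p) * Rpower Q (/ q) = X).
  { unfold X, Rpower. rewrite <- exp_plus. f_equal. field. split; lra. }
  replace (C * (d * K / p + Q / (q * Rpower d (q - 1)))) with (C * ((d * K) / p + (Q / Rpower d (q - 1)) / q)).
  rewrite E1, E2, Rmult_assoc, E3. unfold p. field; repeat split; lra.
  pose proof (Rpower_gt0 d (q-1)). field; repeat split; lra.
Qed.


Lemma half_bound (q lam alpha m G H C : R) (E dE y : R -> R) :
  1 < q -> 0 <= lam <= 1 -> 0 <= alpha -> 0 < m -> 0 <= G -> 0 <= H -> 0 <= C ->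
  (forall s, 0 < s < 1 -> is_derive E s (dE s)) ->
  (forall s, 0 <= s <= 1 -> continuity_pt E s) ->
  (forall s, 0 <= s <= 1 -> Rabs (dE s) <= C * Rabs (s - lam) * y s) ->
  (forall s, 0 <= s <= 1 -> 0 <= y s) ->
  (forall s, 0 <= s <= 1 -> rpow (y s) q <= rpow s alpha * G + m * (1 - rpow s alpha) * H) ->
  Rabs (E 1 - E 0) <= C * rpow ((rpow lam (q/(q-1) + 1) + rpow (1 - lam) (q/(q-1) + 1)) / (q/(q-1) + 1)) (/ (q/(q-1)))
       * rpow ((G + alpha * m * H) / (alpha + 1)) (/ q).
Proof.
intros Hq Hl Ha Hm HG HH HC HE CE Hb Hy HB.
assert (Hp : 0 < q / (q - 1)) by (apply Rdiv_lt_0_compat; lra).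
apply opt_lemma; auto.
- apply Rdiv_lt_0_compat; [|lra].
  destruct (Req_dec lam 0) as [->|Hl0].
  + rewrite Rminus_0_r, rpow_1r. pose proof (rpow_ge0 0 (q/(q-1)+1)); lra.
  + rewrite (rpow_pos lam) by lra. pose proof (Rpower_gt0 lam (q/(q-1)+1)).
    pose proof (rpow_ge0 (1 - lam) (q/(q-1)+1)); lra.
- apply Rdiv_le_0_compat; [|lra]. pose proof (Rmult_le_pos _ _ (Rmult_le_pos _ _ Ha (Rlt_le _ _ Hm)) HH). lra.
- intros d Hd. eapply half_step; eauto.
Qed.

Lemma interval_nbhd I u v : is_interval_nonneg I -> interior I u -> interior I v -> u <= v ->
  exists lo hi, lo < u /\ v < hi /\ forall z, lo < z < hi -> interior I z.
Proof.
intros [_ HI] [d1 H1] [d2 H2] Huv.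
set (e := Rmin d1 d2 / 2).
assert (He : 0 < e) by (unfold e; pose proof (cond_pos d1); pose proof (cond_pos d2); unfold Rmin; destruct (Rle_dec d1 d2); lra).
assert (He1 : e <= d1 / 2) by (unfold e; pose proof (Rmin_l d1 d2); lra).
assert (He2 : e <= d2 / 2) by (unfold e; pose proof (Rmin_r d1 d2); lra).
assert (Iu : I (u - 3 * e / 2)).
{ apply H1. unfold disc. replace (u - 3 * e / 2 - u) with (- (3 * e / 2)) by ring.
  rewrite Rabs_Ropp, Rabs_right by lra. pose proof (cond_pos d1). lra. }
assert (Iv : I (v + 3 * e / 2)).
{ apply H2. unfold disc. replace (v + 3 * e / 2 - v) with (3 * e / 2) by ring.
  rewrite Rabs_right by lra. pose proof (cond_pos d2). lra. }
exists (u - e), (v + e). split; [lra|]. split; [lra|].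
intros z Hz. exists (mkposreal (e / 2) ltac:(lra)). intros w Hw. unfold disc in Hw; simpl in Hw.
apply Rabs_def2 in Hw. apply (HI (u - 3 * e / 2) w (v + 3 * e / 2)); auto. lra.
Qed.


Lemma prim_derive (f : R -> R) lo hi a0 y :
  (forall z, lo < z < hi -> continuity_pt f z) -> lo < a0 < hi -> lo < y < hi ->
  is_derive (fun t => RInt.RInt f a0 t) y (f y).
Proof.
intros Hc Ha Hy.
apply (is_derive_RInt f (fun t => RInt.RInt f a0 t) a0 y).
- exists (mkposreal (Rmin (y - lo) (hi - y)) ltac:(apply Rmin_glb_lt; lra)).
  intros b0 Hb. simpl in Hb. unfold ball in Hb; simpl in Hb. unfold AbsRing_ball, abs, minus, plus, opp in Hb; simpl in Hb.
  apply Rabs_def2 in Hb. pose proof (Rmin_l (y - lo) (hi - y)). pose proof (Rmin_r (y - lo) (hi - y)).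
  apply (RInt_correct (V := R_CompleteNormedModule) f a0 b0). apply (ex_RInt_continuous (V := R_CompleteNormedModule) f). intros z Hz.
  apply (proj1 (continuity_pt_filterlim f z)). apply Hc.
  pose proof (Rmin_l a0 b0). pose proof (Rmin_r a0 b0). pose proof (Rmax_l a0 b0). pose proof (Rmax_r a0 b0).
  unfold Rmin, Rmax in *. destruct (Rle_dec a0 b0); lra.
- apply (proj1 (continuity_pt_filterlim f y)). apply Hc; lra.
Qed.

Lemma f_half (f f' : R -> R) (m alpha a b q c x lam lo hi : R) :
  (forall z, lo < z < hi -> derivable_pt_lim f z (f' z)) ->
  lo < m * a -> b < hi -> 0 < m <= 1 -> 0 <= alpha <= 1 -> 0 < a -> a < b ->
  a <= c <= b -> a <= x <= b -> 0 <= lam <= 1 -> 1 < q ->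
  alpha_m_convex alpha m (fun y => m * a <= y <= b) (fun y => rpow (Rabs (f' y)) q) ->
  Rabs ((x - c) * (1 - lam) * f (m * x) + (x - c) * lam * f (m * c)
        - / m * (RInt.RInt f (m * a) (m * x) - RInt.RInt f (m * a) (m * c)))
  <= m * (x - c) ^ 2 * rpow ((rpow lam (q/(q-1) + 1) + rpow (1 - lam) (q/(q-1) + 1)) / (q/(q-1) + 1)) (/ (q/(q-1)))
       * rpow ((rpow (Rabs (f' (m * x))) q + alpha * m * rpow (Rabs (f' c)) q) / (alpha + 1)) (/ q).
Proof.
intros Hd Hlo Hhi Hm Ha Ha0 Hab Hc Hx Hl Hq Hconv.
pose (P := fun t => RInt.RInt f (m * a) t).
assert (Hf : forall z, lo < z < hi -> is_derive f z (f' z)) by (intros; apply is_derive_Reals; auto).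
assert (Hfc : forall z, lo < z < hi -> continuity_pt f z) by (intros z Hz; apply (deriv_cont_pt _ _ _ (Hf z Hz))).
assert (HP : forall z, lo < z < hi -> is_derive P z (f z)).
{ intros z Hz. apply (prim_derive f lo hi); auto. nra. }
assert (Hmx : m * a <= m * x <= b) by nra.
assert (Hmc : m * a <= m * c <= b) by nra.
assert (Hu : forall s, 0 <= s <= 1 -> m * a <= (m * x - m * c) * s + m * c <= b) by (intros; nra).
set (E := fun s => (x - c) * (s - lam) * f ((m * x - m * c) * s + m * c)
                  - / m * (P ((m * x - m * c) * s + m * c) - P (m * c))).
set (dE := fun s => m * (x - c) ^ 2 * (s - lam) * f' ((m * x - m * c) * s + m * c)).
assert (HEd : forall s, 0 <= s <= 1 -> is_derive E s (dE s)).
{ intros s Hs. pose proof (Hu s Hs).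
  unfold E, dE. eapply isd_eq. apply isd_minus.
  apply (isd_mult (fun s => (x - c) * (s - lam)) (fun s => f ((m * x - m * c) * s + m * c))).
  apply isd_scal. apply isd_minus. apply isd_id. apply isd_const.
  apply (isd_lin f). apply Hf; lra.
  apply isd_scal. apply isd_minus. apply (isd_lin P). apply HP; lra. apply isd_const.
  pose proof (HP ((m * x - m * c) * s + m * c)). field. lra. }
assert (HE10 : E 1 - E 0 = (x - c) * (1 - lam) * f (m * x) + (x - c) * lam * f (m * c)
        - / m * (RInt.RInt f (m * a) (m * x) - RInt.RInt f (m * a) (m * c))).
{ unfold E, P. replace ((m * x - m * c) * 1 + m * c) with (m * x) by ring.
  replace ((m * x - m * c) * 0 + m * c) with (m * c) by ring. ring. }
rewrite <- HE10.
apply (half_bound q lam alpha m _ _ (m * (x - c) ^ 2) E dE (fun s => Rabs (f' ((m * x - m * c) * s + m * c)))); try lra.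
- apply rpow_ge0.
- apply rpow_ge0.
- pose proof (pow2_ge_0 (x - c)). nra.
- intros s Hs. apply HEd; lra.
- intros s Hs. apply (deriv_cont_pt _ _ _ (HEd s Hs)).
- intros s Hs. unfold dE. rewrite !Rabs_mult. right.
  rewrite (Rabs_right m) by lra. rewrite (Rabs_right ((x - c) ^ 2)) by (apply Rle_ge, pow2_ge_0). ring.
- intros s Hs. apply Rabs_pos.
- intros s Hs. pose proof (Hconv (m * x) c s Hmx ltac:(split; nra) Hs) as HC.
  replace (s * (m * x) + m * (1 - s) * c) with ((m * x - m * c) * s + m * c) in HC by ring.
  apply HC. apply Hu; exact Hs.
Qed.


Lemma RInt_def_eq (g : R -> R) a b v : is_RInt g a b v -> Defs.RInt g a b = v.
Proof.
intros H.
assert (Hex : ex_RInt g a b) by (exists v; exact H).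
pose proof (ex_RInt_Reals_0 g a b Hex) as pr.
assert (Hv : RInt.RInt g a b = v) by (apply is_RInt_unique; exact H).
unfold Defs.RInt. destruct (excluded_middle_informative _) as [Hx|Hx].
- destruct (constructive_indefinite_description _ Hx) as [w [pr' Hw]]. simpl.
  rewrite <- Hw, <- RInt_Reals. exact Hv.
- exfalso. apply Hx. exists (RiemannInt pr), pr. reflexivity.
Qed.

Lemma isd_comp (g h : R -> R) x a b : is_derive g (h x) b -> is_derive h x a ->
  is_derive (fun t => g (h t)) x (b * a).
Proof.
rewrite !is_derive_Reals. intros Hg Hh.
exact (derivable_pt_lim_comp h g x a b Hh Hg).
Qed.

Lemma cont_of_cpt (f : R -> R) x : continuity_pt f x -> continuous f x.
Proof. intros H. apply (proj1 (continuity_pt_filterlim f x)). exact H. Qed.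

Lemma Beta_p1 p v : 0 < p -> v = 1 -> Beta (p + 1) v = / (p + 1).
Proof.
intros Hp ->. unfold Beta. apply RInt_def_eq.
apply (is_RInt_ext (fun t => rpow t p)).
{ intros t Ht. replace (p + 1 - 1) with p by ring. replace (1 - 1) with 0 by ring. rewrite rpow_r0. now rewrite Rmult_1_r. }
replace (/ (p + 1)) with (minus ((fun t => / (p + 1) * rpow t (p + 1)) 1) ((fun t => / (p + 1) * rpow t (p + 1)) 0)).
apply (is_RInt_derive (fun t => / (p + 1) * rpow t (p + 1)) (fun t => rpow t p)).
- intros t Ht. eapply isd_eq. apply isd_scal. apply rpow_derive_gt1; lra.
  replace (p + 1 - 1) with p by ring. field. lra.
- intros t Ht. apply rpow_cont; lra.
- unfold minus, plus, opp; simpl. rewrite rpow_1r, (rpow_npos 0) by lra. field. lra.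
Qed.

Lemma Beta_1p p u : 0 < p -> u = 1 -> Beta u (p + 1) = / (p + 1).
Proof.
intros Hp ->. unfold Beta. apply RInt_def_eq.
apply (is_RInt_ext (fun t => rpow (-1 * t + 1) p)).
{ intros t Ht. replace (p + 1 - 1) with p by ring. replace (1 - 1) with 0 by ring. rewrite rpow_r0.
  replace (-1 * t + 1) with (1 - t) by ring. now rewrite Rmult_1_l. }
replace (/ (p + 1)) with (minus ((fun t => - / (p + 1) * rpow (-1 * t + 1) (p + 1)) 1) ((fun t => - / (p + 1) * rpow (-1 * t + 1) (p + 1)) 0)).
apply (is_RInt_derive (fun t => - / (p + 1) * rpow (-1 * t + 1) (p + 1)) (fun t => rpow (-1 * t + 1) p)).
- intros t Ht. eapply isd_eq. apply isd_scal. apply (isd_lin (fun w => rpow w (p + 1))). apply rpow_derive_gt1; lra.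
  replace (p + 1 - 1) with p by ring. field. lra.
- intros t Ht. apply cont_of_cpt.
  apply (continuity_pt_comp (fun t => -1 * t + 1) (fun w => rpow w p)).
  apply (deriv_cont_pt _ _ (-1 * 1 + 0)). apply isd_plus. apply isd_scal, isd_id. apply isd_const.
  apply rpow_cont_pt; lra.
- unfold minus, plus, opp; simpl. replace (-1 * 1 + 1) with 0 by ring. replace (-1 * 0 + 1) with 1 by ring.
  rewrite rpow_1r, (rpow_npos 0) by lra. field. lra.
Qed.

Lemma J_int p lam u v w : 0 < p -> 0 < lam < 1 -> u = p -> v = 0 -> w = p + 2 ->
  Defs.RInt (fun t => rpow t u * rpow (1 - t) v * rpow (1 - (1 - lam) * t) (- w)) 0 1
  = / ((p + 1) * rpow lam (p + 1)).
Proof.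
intros Hp Hl -> -> ->. apply RInt_def_eq.
set (k := - (1 - lam)).
assert (HD : forall t, 0 <= t <= 1 -> 0 < k * t + 1) by (intros; unfold k; nra).
apply (is_RInt_ext (fun t => rpow t p * rpow (k * t + 1) (- (p + 2)))).
{ intros t Ht. rewrite rpow_r0. replace (k * t + 1) with (1 - (1 - lam) * t) by (unfold k; ring).
  now rewrite Rmult_1_r. }
set (F := fun t => / (p + 1) * rpow (t * / (k * t + 1)) (p + 1)).
replace (/ ((p + 1) * rpow lam (p + 1))) with (minus (F 1) (F 0)).
apply (is_RInt_derive F).
- rewrite Rmin_left, Rmax_right by lra. intros t Ht. pose proof (HD t Ht) as Dt.
  unfold F. eapply isd_eq. apply isd_scal.
  apply (isd_comp (fun y => rpow y (p + 1)) (fun t => t * / (k * t + 1))).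
  apply rpow_derive_gt1; lra.
  apply (isd_mult (fun t => t) (fun t => / (k * t + 1))). apply isd_id.
  apply is_derive_inv. apply (isd_plus (fun t => k * t) (fun _ => 1)). apply isd_scal, isd_id. apply isd_const. lra.
  replace (p + 1 - 1) with p by ring.
  destruct (Req_dec t 0) as [->|Ht0].
  + rewrite Rmult_0_l, !(rpow_npos 0 p) by lra. ring.
  + assert (Htp : 0 < t) by lra.
    assert (Hq : 0 < t * / (k * t + 1)) by (apply Rmult_lt_0_compat; [lra| apply Rinv_0_lt_compat; lra]).
    rewrite !rpow_pos by lra. set (D := k * t + 1) in *. unfold Rpower.
    rewrite ln_mult, ln_Rinv by (try lra; apply Rinv_0_lt_compat; lra).
    replace (- (p + 2) * ln D) with (p * - ln D + - (ln D + ln D)) by ring.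
    rewrite !exp_plus, exp_Ropp, exp_plus, exp_ln by lra.
    replace (p * (ln t + - ln D)) with (p * ln t + p * - ln D) by ring. rewrite exp_plus.
    unfold minus, plus, opp, mult, scal, one, zero; simpl. unfold mult; simpl. unfold D in *. field. repeat split; lra.
- rewrite Rmin_left, Rmax_right by lra. intros t Ht. apply cont_of_cpt.
  apply cpt_mult. apply rpow_cont_pt; lra.
  apply (deriv_cont_pt _ _ (k * ((- (p + 2)) * rpow (k * t + 1) (- (p + 2) - 1)))).
  apply (isd_lin (fun y => rpow y (- (p + 2)))). apply rpow_derive_pos. apply HD; exact Ht.
- unfold minus, plus, opp, F; simpl.
  replace (k * 1 + 1) with lam by (unfold k; ring). rewrite Rmult_0_l, (rpow_npos 0) by lra.
  rewrite Rmult_1_l, !rpow_pos by (try lra; apply Rinv_0_lt_compat; lra).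
  unfold Rpower. rewrite ln_Rinv by lra. replace ((p + 1) * - ln lam) with (- ((p + 1) * ln lam)) by ring.
  rewrite exp_Ropp. pose proof (exp_pos ((p + 1) * ln lam)). field. repeat split; lra.
Qed.

Lemma A4_eq p lam : 0 < p -> 0 <= lam <= 1 ->
  A4 1 lam p = (rpow lam (p + 1) + rpow (1 - lam) (p + 1)) / (p + 1).
Proof.
intros Hp Hl. unfold A4.
destruct (Req_EM_T lam 0) as [->|H0].
{ rewrite (rpow_npos 0) by lra. rewrite Rminus_0_r, rpow_1r. field. lra. }
destruct (Req_EM_T lam 1) as [->|H1].
{ rewrite Beta_p1 by (try lra; field). rewrite Rminus_diag, (rpow_npos 0) by lra. rewrite rpow_1r. field. lra. }
unfold F21. rewrite Beta_1p by (try lra; field). rewrite Beta_p1 by (try lra; ring).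
rewrite (J_int p lam) by (try lra; ring).
replace ((1 * p + 1) / 1) with (p + 1) by field.
rewrite (rpow_pos lam) by lra. pose proof (Rpower_gt0 lam (p + 1)).
field. repeat split; lra.
Qed.

Theorem mainTheorem10
  (I : R -> Prop) (f f' : R -> R) (m alpha a b q : R)
  (HI : is_interval_nonneg I)
  (Hder : forall x, interior I x -> derivable_pt_lim f x (f' x))
  (Hm : 0 < m <= 1) (Halpha : 0 <= alpha <= 1) (Hab : a < b)
  (Hma : interior I (m * a)) (Hb : interior I b)
  (Hconv : alpha_m_convex alpha m (fun y => m * a <= y <= b)
             (fun y => rpow (Rabs (f' y)) q))
  (Hq : 1 < q) :
  let p := q / (q - 1) in
  forall x lam, a <= x <= b -> 0 <= lam <= 1 ->
    Rabs ((1 - lam) * f (m * x)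
          + lam * (((x - a) * f (m * a) + (b - x) * f (m * b)) / (b - a))
          - / (m * (b - a)) * RInt f (m * a) (m * b))
    <= m * rpow (A4 1 lam p) (/ p) / (b - a) *
       ((x - a) ^ 2 *
          rpow ((rpow (Rabs (f' (m * x))) q + alpha * m * rpow (Rabs (f' a)) q)
                / (alpha + 1)) (/ q)
        + (b - x) ^ 2 *
          rpow ((rpow (Rabs (f' (m * x))) q + alpha * m * rpow (Rabs (f' b)) q)
                / (alpha + 1)) (/ q)).
Proof.
intros p x lam Hx Hl.
assert (Hp : 0 < p) by (unfold p; apply Rdiv_lt_0_compat; lra).
assert (Ha0 : 0 < a).
{ destruct Hma as [d Hd]. assert (I (m * a - d / 2)).
  { apply Hd. unfold disc. replace (m * a - d / 2 - m * a) with (- (d / 2)) by ring.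
    rewrite Rabs_Ropp, Rabs_right by (pose proof (cond_pos d); lra). pose proof (cond_pos d); lra. }
  destruct HI as [HI0 _]. apply HI0 in H. pose proof (cond_pos d). nra. }
assert (Hmab : m * a <= b) by nra.
destruct (interval_nbhd I (m * a) b HI Hma Hb Hmab) as [lo [hi [Hlo [Hhi Hint]]]].
assert (Hd : forall z, lo < z < hi -> derivable_pt_lim f z (f' z)) by (intros; apply Hder, Hint; auto).
pose proof (f_half f f' m alpha a b q a x lam lo hi Hd Hlo Hhi Hm Halpha Ha0 Hab ltac:(lra) Hx Hl Hq Hconv) as HA.
pose proof (f_half f f' m alpha a b q b x lam lo hi Hd Hlo Hhi Hm Halpha Ha0 Hab ltac:(lra) Hx Hl Hq Hconv) as HB.
fold p in HA, HB.
rewrite <- (A4_eq p lam Hp Hl) in HA, HB.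
assert (Hfc : forall z, lo < z < hi -> continuous f z).
{ intros z Hz. apply cont_of_cpt. apply (deriv_cont_pt _ _ (f' z)). apply is_derive_Reals; auto. }
assert (HR : Defs.RInt f (m * a) (m * b) = RInt.RInt f (m * a) (m * b)).
{ apply RInt_def_eq. apply (RInt_correct (V := R_CompleteNormedModule)).
  apply (ex_RInt_continuous (V := R_CompleteNormedModule)). intros z Hz. apply Hfc.
  rewrite Rmin_left, Rmax_right in Hz by nra. nra. }
rewrite HR. rewrite RInt_point in HA. unfold zero in HA; simpl in HA.
set (Da := (x - a) * (1 - lam) * f (m * x) + (x - a) * lam * f (m * a) - / m * (RInt.RInt f (m * a) (m * x) - 0)) in HA.
set (Db := (x - b) * (1 - lam) * f (m * x) + (x - b) * lam * f (m * b) - / m * (RInt.RInt f (m * a) (m * x) - RInt.RInt f (m * a) (m * b))) in HB.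
replace ((1 - lam) * f (m * x) + lam * (((x - a) * f (m * a) + (b - x) * f (m * b)) / (b - a))
         - / (m * (b - a)) * RInt.RInt f (m * a) (m * b)) with ((Da - Db) / (b - a))
  by (unfold Da, Db; field; lra).
unfold Rdiv at 1. rewrite Rabs_mult, (Rabs_right (/ (b - a))) by (apply Rle_ge; left; apply Rinv_0_lt_compat; lra).
apply Rle_trans with ((Rabs Da + Rabs Db) * / (b - a)).
{ apply Rmult_le_compat_r. left; apply Rinv_0_lt_compat; lra.
  unfold Rminus. eapply Rle_trans. apply Rabs_triang. rewrite Rabs_Ropp. lra. }
apply Rle_trans with ((m * (x - a) ^ 2 * rpow (A4 1 lam p) (/ p) * rpow ((rpow (Rabs (f' (m * x))) q + alpha * m * rpow (Rabs (f' a)) q) / (alpha + 1)) (/ q)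
   + m * (x - b) ^ 2 * rpow (A4 1 lam p) (/ p) * rpow ((rpow (Rabs (f' (m * x))) q + alpha * m * rpow (Rabs (f' b)) q) / (alpha + 1)) (/ q)) * / (b - a)).
{ apply Rmult_le_compat_r. left; apply Rinv_0_lt_compat; lra. lra. }
right. field. lra.
Qed.
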